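(* In the setting described in the context, for all $k\ge0$: if $u_{k-1}(s)>0$ for all states $s\in S\setminus W_2$, then for all player-2 strategies $\pi_2$ we have $\Pr_s^{\overline{\eta}_k,\pi_2}(\mathrm{Reach}(T\cup W_2))=1$ for all $s\in S$.
   Context: Concurrent game structure $G=(S,M,\Gamma_1,\Gamma_2,\delta)$: finite states, finite moves, nonempty move sets $\Gamma_i(s)$, $\delta(s,a_1,a_2)\in\mathrm{Distr}(S)$ (simultaneous independent moves). Selectors assign to each state a distribution on available moves; $\overline{\xi}$ is the memoryless strategy playing $\xi$ forever; $\Pr_s^{\pi_1,\pi_2}$ is the induced measure on plays from $s$; $\mathrm{Reach}(X)$ is the set of plays visiting $X$. For a valuation $v:S\to[0,1]$: $\mathrm{Pre}_{\xi_1,\xi_2}(v)(s)=\sum_{a,b}\sum_tv(t)\delta(s,a,b)(t)\xi_1(s)(a)\xi_2(s)(b)$, $\mathrm{Pre}_{1:\xi_1}(v)(s)=\inf_{\xi_2}\mathrm{Pre}_{\xi_1,\xi_2}(v)(s)$, $\mathrm{Pre}_1(v)(s)=\sup_{\xi_1}\mathrm{Pre}_{1:\xi_1}(v)(s)$. Fix $T\subseteq S$; $W_2=\{s:\sup_{\pi_1}\inf_{\pi_2}\Pr_s^{\pi_1,\pi_2}(\mathrm{Reach}(T))=0\}$; all states of $T\cup W_2$ are assumed absorbing. Value iteration: $u_0=[T]$ (indicator of $T$), $u_{k+1}=\mathrm{Pre}_1(u_k)$. For each $j\ge1$ fix a player-1 selector $\zeta_j$ with $\mathrm{Pre}_{1:\zeta_j}(u_{j-1})=\mathrm{Pre}_1(u_{j-1})$.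 Entry time $\ell_k(s)=\min\{j\le k:u_j(s)=u_k(s)\}$. Selector $\eta_k$: $\eta_k(s)=\zeta_{\ell_k(s)}(s)$ if $\ell_k(s)>0$, and $\eta_k(s)$ uniform on $\Gamma_1(s)$ if $\ell_k(s)=0$. *)

(* Defs.v *)
From HB Require Import structures.
From mathcomp Require Import all_boot all_order all_algebra.
From mathcomp Require Import boolp classical_sets reals.
Set Implicit Arguments. Unset Strict Implicit. Unset Printing Implicit Defensive.
Import Order.TTheory GRing.Theory Num.Theory.
Local Open Scope ring_scope.

Section ConcurrentGame.
Variables (R : realType) (S M : finType).

Definition is_distr (T : finType) (p : T -> R) :=
  (forall x, 0 <= p x) /\ \sum_(x : T) p x = 1.

Definition is_selector (G : S -> {set M}) (xi : S -> M -> R) :=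
  forall s, is_distr (xi s) /\ (forall a, a \notin G s -> xi s a = 0).

(* (History-dependent, randomized) strategies.  A history is a nonempty
   sequence of states s :: h; its current state is [last s h]. *)
Definition strategy := S -> seq S -> M -> R.

Definition is_strategy (G : S -> {set M}) (pi : strategy) :=
  forall s h, is_distr (pi s h) /\ (forall a, a \notin G (last s h) -> pi s h a = 0).

Definition memoryless (xi : S -> M -> R) : strategy := fun s h => xi (last s h).

Variable delta : S -> M -> M -> S -> R.

Definition step (pi1 pi2 : strategy) (s : S) (h : seq S) (t : S) : R :=
  \sum_(a : M) \sum_(b : M) pi1 s h a * pi2 s h b * delta (last s h) a b t.

(* Probability (measure of the union of the corresponding cylinders) that a play
   extending the history s :: h visits X within n further steps (counting the
   current state). *)
Fixpoint reach_within (n : nat) (pi1 pi2 : strategy) (X : pred S)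
    (s : S) (h : seq S) : R :=
  if X (last s h) then 1 else
  match n with
  | 0 => 0
  | n'.+1 => \sum_(t : S) step pi1 pi2 s h t * reach_within n' pi1 pi2 X s (rcons h t)
  end.

(* Pr_s^{pi1,pi2}(Reach X): by countable additivity/continuity of the play
   measure, the supremum (= limit) of the finite-horizon reach probabilities. *)
Definition PrReach (pi1 pi2 : strategy) (X : pred S) (s : S) : R :=
  sup (range (fun n => reach_within n pi1 pi2 X s [::])).

Definition Pre (xi1 xi2 : S -> M -> R) (v : S -> R) (s : S) : R :=
  \sum_(a : M) \sum_(b : M) \sum_(t : S) v t * delta s a b t * xi1 s a * xi2 s b.

Variables (G1 G2 : S -> {set M}).

Definition Pre1_with (xi1 : S -> M -> R) (v : S -> R) (s : S) : R :=
  inf ((fun xi2 => Pre xi1 xi2 v s) @` [set xi2 | is_selector G2 xi2]).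

Definition Pre1 (v : S -> R) (s : S) : R :=
  sup ((fun xi1 => Pre1_with xi1 v s) @` [set xi1 | is_selector G1 xi1]).

Variable T : {set S}.

Definition val1 (s : S) : R :=
  sup ((fun pi1 => inf ((fun pi2 => PrReach pi1 pi2 (fun t => t \in T) s)
                          @` [set pi2 | is_strategy G2 pi2]))
       @` [set pi1 | is_strategy G1 pi1]).

Definition W2 : pred S := fun s => val1 s == 0.

Definition TW2 : pred S := fun s => (s \in T) || W2 s.

Fixpoint u (k : nat) : S -> R :=
  match k with
  | 0 => fun s => if s \in T then 1 else 0
  | k'.+1 => Pre1 (u k')
  end.

Definition ell (k : nat) (s : S) : nat :=
  find (fun j => u j s == u k s) (iota 0 k.+1).

Definition uniform_sel (G : S -> {set M}) : S -> M -> R :=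
  fun s a => if a \in G s then (#|G s|%:R)^-1 else 0.

Variable zeta : nat -> S -> M -> R.

Definition eta_sel (k : nat) : S -> M -> R :=
  fun s => if (0 < ell k s)%N then zeta (ell k s) s else uniform_sel G1 s.

End ConcurrentGame.

(* Main.v *)
Require Import Defs.
From HB Require Import structures.
From mathcomp Require Import all_boot all_order all_algebra.
From mathcomp Require Import boolp classical_sets reals.
From mathcomp Require Import ring lra.
Set Implicit Arguments. Unset Strict Implicit. Unset Printing Implicit Defensive.
Import Order.TTheory GRing.Theory Num.Theory.
Local Open Scope ring_scope.
Local Open Scope classical_set_scope.

Section Reach.
Variables (R : realType) (S M : finType) (delta : S -> M -> M -> S -> R).
Variables (pi1 pi2 : strategy R S M) (X : pred S).
Hypothesis step0 : forall s h t, 0 <= step delta pi1 pi2 s h t.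
Hypothesis step1 : forall s h, ~~ X (last s h) -> \sum_t step delta pi1 pi2 s h t = 1.

Notation rw n := (reach_within delta n pi1 pi2 X).

Lemma rw_ge0 n s h : 0 <= rw n s h.
Proof.
elim: n h => [|n IH] h /=; case: (X _) => //.
by apply: sumr_ge0 => t _; apply: mulr_ge0.
Qed.

Lemma rw_le1 n s h : rw n s h <= 1.
Proof.
elim: n h => [|n IH] h /=; case: ifP => // HX.
rewrite -(step1 (negbT HX)); apply: ler_sum => t _.
by rewrite -[X in _ <= X]mulr1 ler_wpM2l.
Qed.

Lemma rw0 s h : rw 0 s h = if X (last s h) then 1 else 0.
Proof. by []. Qed.

Lemma rwS n s h : rw n.+1 s h = if X (last s h) then 1 else
   \sum_t step delta pi1 pi2 s h t * rw n s (rcons h t).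
Proof. by []. Qed.

Lemma rw_mono n s h : rw n s h <= rw n.+1 s h.
Proof.
elim: n h => [|n IH] h; rewrite rwS ?rw0 ?rwS; case: ifP => // HX.
  by apply: sumr_ge0 => t _; apply: mulr_ge0 => //; exact: rw_ge0.
by apply: ler_sum => t _; apply: ler_wpM2l.
Qed.

Lemma rw_monoD m n s h : rw n s h <= rw (m + n) s h.
Proof.
elim: m => // m IH; exact: le_trans IH (rw_mono _ _ _).
Qed.

Variables (rk : S -> nat) (q : R).
Hypothesis rk0 : forall x, rk x = 0%N -> X x.
Hypothesis q0 : 0 <= q.
Hypothesis q1 : q <= 1.
Hypothesis good : forall s h, ~~ X (last s h) ->
  q <= \sum_(t | (rk t < rk (last s h))%N) step delta pi1 pi2 s h t.

Lemma rw_amp n B : 0 <= B -> (forall s h, 1 - rw n s h <= B) ->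
  forall r s h, (rk (last s h) <= r)%N -> 1 - rw (r + n) s h <= B * (1 - q ^+ r).
Proof.
move=> B0 HB r; elim: r => [|r IH] s h Hr.
  have HX : X (last s h) by apply: rk0; apply/eqP; rewrite -leqn0.
  by case: n HB => [|n] HB /=; rewrite HX expr0 !subrr mulr0.
rewrite addSn rwS; case: ifP => HX.
  by rewrite subrr mulr_ge0 // subr_ge0 exprn_ile1.
have Hs := step1 (negbT HX).
set x := last s h.
pose e t := if (rk t < rk x)%N then B * (1 - q ^+ r) else B.
have H1 : 1 - \sum_t step delta pi1 pi2 s h t * rw (r + n) s (rcons h t)
   <= \sum_t step delta pi1 pi2 s h t * e t.
  rewrite -{1}Hs -sumrB; apply: ler_sum => t _.
  rewrite -{1}[step _ _ _ _ _ _]mulr1 -mulrBr; apply: ler_wpM2l => //.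
  rewrite /e; case: ifP => Ht.
    apply: IH; rewrite last_rcons; rewrite -ltnS; exact: leq_trans Ht Hr.
  apply: le_trans (HB s (rcons h t)); rewrite lerD2l lerN2.
  exact: rw_monoD.
apply: le_trans H1 _.
rewrite (bigID (fun t => (rk t < rk x)%N)) /=.
have -> : \sum_(t | (rk t < rk x)%N) step delta pi1 pi2 s h t * e t =
   (\sum_(t | (rk t < rk x)%N) step delta pi1 pi2 s h t) * (B * (1 - q ^+ r)).
  by rewrite mulr_suml; apply: eq_bigr => t Ht; rewrite /e Ht.
have -> : \sum_(t | ~~ (rk t < rk x)%N) step delta pi1 pi2 s h t * e t =
   (\sum_(t | ~~ (rk t < rk x)%N) step delta pi1 pi2 s h t) * B.
  by rewrite mulr_suml; apply: eq_bigr => t Ht; rewrite /e (negbTE Ht).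
rewrite (bigID (fun t => (rk t < rk x)%N)) /= in Hs.
have Hg := good (negbT HX).
rewrite exprS; set P := \sum_(t | _) _ in Hg Hs *.
set Q := \sum_(t | _) _ in Hs *.
have : 0 <= B * q ^+ r by rewrite mulr_ge0 // exprn_ge0.
nra.
Qed.

Variable N : nat.
Hypothesis rkN : forall x, (rk x <= N)%N.

Lemma rw_geo m s h : 1 - rw (m * N) s h <= (1 - q ^+ N) ^+ m.
Proof.
elim: m s h => [|m IH] s h.
  by rewrite mul0n expr0 lerBlDr lerDl rw_ge0.
rewrite mulSn exprS mulrC; apply: rw_amp => //.
  by rewrite exprn_ge0 // subr_ge0 exprn_ile1.
Qed.

End Reach.

Lemma geo_small (R : realType) (p e : R) : 0 < p -> p <= 1 -> 0 < e ->
  exists m, (1 - p) ^+ m < e.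
Proof.
move=> p0 p1 e0.
have key : forall m, (1 - p) ^+ m * (1 + m%:R * p) <= 1.
  elim=> [|m IH]; first by rewrite expr0 mul0r addr0 mulr1.
  rewrite exprS -natr1.
  have h0 : 0 <= (1 - p) ^+ m by rewrite exprn_ge0 // subr_ge0.
  have hm : 0 <= m%:R :> R by rewrite ler0n.
  set a := (1 - p) ^+ m in h0 IH *.
  set n := m%:R in hm IH *.
  have : 0 <= a * (p * p) * (n + 1) by rewrite !mulr_ge0 // ?addr_ge0 // ltW.
  nra.
have ep : 0 < e * p by rewrite mulr_gt0.
have ipos : 0 < (e * p)^-1 by rewrite invr_gt0.
have hb := archi_boundP (ltW ipos).
set m := Num.bound _ in hb.
exists m.
have k := key m.
have h1 : 1 < m%:R * (e * p).
  by rewrite -(ltr_pdivrMr _ _ ep) mul1r.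
have h0 : 0 <= (1 - p) ^+ m by rewrite exprn_ge0 // subr_ge0.
have hm : 0 <= m%:R :> R by rewrite ler0n.
set a := (1 - p) ^+ m in h0 k *.
set n := m%:R in hm h1 k *.
rewrite ltNge; apply/negP => hae.
have : e * (1 + n * p) <= a * (1 + n * p).
  by rewrite ler_wpM2r // addr_ge0 // mulr_ge0 // ltW.
nra.
Qed.

Lemma rw_sup (R : realType) (S M : finType) (delta : S -> M -> M -> S -> R)
  (pi1 pi2 : strategy R S M) (X : pred S)
  (step0 : forall s h t, 0 <= step delta pi1 pi2 s h t)
  (step1 : forall s h, ~~ X (last s h) -> \sum_t step delta pi1 pi2 s h t = 1)
  (rk : S -> nat) (q : R) (rk0 : forall x, rk x = 0%N -> X x)
  (qpos : 0 < q) (q1 : q <= 1)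
  (good : forall s h, ~~ X (last s h) ->
     q <= \sum_(t | (rk t < rk (last s h))%N) step delta pi1 pi2 s h t)
  (N : nat) (rkN : forall x, (rk x <= N)%N) s :
  sup (range (fun n => reach_within delta n pi1 pi2 X s [::])) = 1.
Proof.
set E := range _.
have ub : ubound E 1 by move=> y [n _ <-]; exact: rw_le1.
have ne : E !=set0 by exists (reach_within delta 0 pi1 pi2 X s [::]); exists 0%N.
have hub : has_ubound E by exists 1.
apply/eqP; rewrite eq_le ge_sup //=; rewrite leNgt; apply/negP => hlt.
have p0 : 0 < q ^+ N by rewrite exprn_gt0.
have p1 : q ^+ N <= 1 by rewrite exprn_ile1 // ltW.
have e0 : 0 < 1 - sup E by rewrite subr_gt0.
have [m hm] := geo_small p0 p1 e0.
have hg := rw_geo step0 step1 rk0 (ltW qpos) q1 good rkN m s [::].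
have hE : E (reach_within delta (m * N) pi1 pi2 X s [::]) by exists (m * N)%N.
have := ub_le_sup hub hE.
lra.
Qed.




Lemma uniform_selP (R : realType) (S M : finType) (G : S -> {set M}) :
  (forall s, (0 < #|G s|)%N) -> is_selector G (uniform_sel R G).
Proof.
move=> HG s; split; last by move=> a /negbTE Ha; rewrite /uniform_sel Ha.
split=> [a|]; first by rewrite /uniform_sel; case: ifP => // _; rewrite invr_ge0 ler0n.
rewrite /uniform_sel -big_mkcond /= sumr_const -[_ *+ _]mulr_natr mulVf //.
by rewrite pnatr_eq0 -lt0n.
Qed.

Section Game.
Variables (R : realType) (S M : finType) (G1 G2 : S -> {set M}).
Variables (delta : S -> M -> M -> S -> R).
Hypothesis HG1 : forall s, (0 < #|G1 s|)%N.
Hypothesis HG2 : forall s, (0 < #|G2 s|)%N.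
Hypothesis Hd : forall s a b, is_distr (delta s a b).

Lemma sel_ge0 G (xi : S -> M -> R) s a : is_selector G xi -> 0 <= xi s a.
Proof. by move=> /(_ s) [[]]. Qed.

Lemma sel_sum1 G (xi : S -> M -> R) s : is_selector G xi -> \sum_a xi s a = 1.
Proof. by move=> /(_ s) [[]]. Qed.

Lemma d_ge0 s a b t : 0 <= delta s a b t.
Proof. by case: (Hd s a b). Qed.

Lemma d_sum1 s a b : \sum_t delta s a b t = 1.
Proof. by case: (Hd s a b). Qed.

Definition unit01 (v : S -> R) := forall t, 0 <= v t <= 1.

Lemma Pre_ge0 xi1 xi2 v s : is_selector G1 xi1 -> is_selector G2 xi2 ->
  (forall t, 0 <= v t) -> 0 <= Pre delta xi1 xi2 v s.
Proof.
move=> H1 H2 Hv; do 3 (apply: sumr_ge0 => ? _).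
by rewrite !mulr_ge0 ?d_ge0 ?(sel_ge0 _ _ H1) ?(sel_ge0 _ _ H2).
Qed.

Lemma Pre_mono xi1 xi2 v w s : is_selector G1 xi1 -> is_selector G2 xi2 ->
  (forall t, v t <= w t) -> Pre delta xi1 xi2 v s <= Pre delta xi1 xi2 w s.
Proof.
move=> H1 H2 Hv; do 3 (apply: ler_sum => ? _).
by rewrite ler_wpM2r ?(sel_ge0 _ _ H2) // ler_wpM2r ?(sel_ge0 _ _ H1) //
   ler_wpM2r ?d_ge0.
Qed.

Lemma Pre_const1 xi1 xi2 s : is_selector G1 xi1 -> is_selector G2 xi2 ->
  Pre delta xi1 xi2 (fun=> 1) s = 1.
Proof.
move=> H1 H2; rewrite /Pre.
transitivity (\sum_a \sum_b xi1 s a * xi2 s b).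
  apply: eq_bigr => a _; apply: eq_bigr => b _.
  under eq_bigr do rewrite mul1r.
  by rewrite -!mulr_suml d_sum1 mul1r.
rewrite -(sel_sum1 s H1); apply: eq_bigr => a _.
by rewrite -mulr_sumr (sel_sum1 s H2) mulr1.
Qed.

Lemma Pre_le1 xi1 xi2 v s : is_selector G1 xi1 -> is_selector G2 xi2 ->
  unit01 v -> Pre delta xi1 xi2 v s <= 1.
Proof.
move=> H1 H2 Hv; rewrite -(Pre_const1 s H1 H2); apply: Pre_mono => // t.
by case/andP: (Hv t).
Qed.

Lemma Pre1_with_ge xi1 v s c :
  (forall xi2, is_selector G2 xi2 -> c <= Pre delta xi1 xi2 v s) ->
  c <= Pre1_with delta G2 xi1 v s.
Proof.
move=> H; apply: lb_le_inf.
  by exists (Pre delta xi1 (uniform_sel R G2) v s); exists (uniform_sel R G2) => //; exact: uniform_selP.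
by move=> y [xi2 Hxi2 <-]; apply: H.
Qed.

Lemma Pre1_with_le xi1 xi2 v s : is_selector G1 xi1 -> is_selector G2 xi2 ->
  (forall t, 0 <= v t) -> Pre1_with delta G2 xi1 v s <= Pre delta xi1 xi2 v s.
Proof.
move=> H1 H2 Hv; apply: ge_inf; last by exists xi2.
exists 0 => y [xi Hxi <-]; exact: Pre_ge0.
Qed.

Lemma Pre1_le xi1 v s : is_selector G1 xi1 -> unit01 v ->
  Pre1_with delta G2 xi1 v s <= Pre1 delta G1 G2 v s.
Proof.
move=> H1 Hv; apply: ub_le_sup; last by exists xi1.
exists 1 => y [xi Hxi <-].
apply: le_trans (Pre1_with_le s Hxi (uniform_selP R HG2) _) _ => //.
  by move=> t; case/andP: (Hv t).
exact: Pre_le1 Hxi (uniform_selP R HG2) Hv.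
Qed.

Lemma Pre1_ge v s c :
  (forall xi1, is_selector G1 xi1 -> Pre1_with delta G2 xi1 v s <= c) ->
  Pre1 delta G1 G2 v s <= c.
Proof.
move=> H; apply: ge_sup.
  by exists (Pre1_with delta G2 (uniform_sel R G1) v s); exists (uniform_sel R G1) => //; exact: uniform_selP.
by move=> y [xi1 Hxi1 <-]; apply: H.
Qed.

Lemma Pre1_01 v : unit01 v -> unit01 (Pre1 delta G1 G2 v).
Proof.
move=> Hv s; apply/andP; split.
  apply: le_trans (Pre1_le _ (uniform_selP R HG1) Hv).
  apply: Pre1_with_ge => xi2 H2; apply: Pre_ge0 (uniform_selP R HG1) H2 _ => t.
  by case/andP: (Hv t).
apply: Pre1_ge => xi1 H1.
apply: le_trans (Pre1_with_le s H1 (uniform_selP R HG2) _) _.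
  by move=> t; case/andP: (Hv t).
exact: Pre_le1 H1 (uniform_selP R HG2) Hv.
Qed.

Lemma Pre1_mono v w s : unit01 v -> unit01 w -> (forall t, v t <= w t) ->
  Pre1 delta G1 G2 v s <= Pre1 delta G1 G2 w s.
Proof.
move=> Hv Hw Hvw; apply: Pre1_ge => xi1 H1.
apply: le_trans (Pre1_le _ H1 Hw).
apply: Pre1_with_ge => xi2 H2.
apply: le_trans (Pre1_with_le s H1 H2 _) _.
  by move=> t; case/andP: (Hv t).
exact: Pre_mono.
Qed.

Lemma d_other s a b t : delta s a b s = 1 -> t != s -> delta s a b t = 0.
Proof.
move=> Hs Ht.
have := d_sum1 s a b; rewrite (bigD1 s) //= Hs => /(congr1 (fun z => z - 1)).
rewrite addrC addrK subrr => H.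
by apply: (psumr_eq0P _ H) => // i _; exact: d_ge0.
Qed.

Variable T : {set S}.
Hypothesis Habs : forall s, TW2 delta G1 G2 T s ->
  forall a b, a \in G1 s -> b \in G2 s -> delta s a b s = 1.

Notation u := (u delta G1 G2 T).

Lemma u01 j : unit01 (u j).
Proof.
elim: j => [|j IH] /=; last exact: Pre1_01.
by move=> t /=; case: ifP; rewrite ?lexx ?ler01.
Qed.

Lemma Pre_u0 xi1 xi2 s : is_selector G1 xi1 -> is_selector G2 xi2 -> s \in T ->
  Pre delta xi1 xi2 (u 0) s = 1.
Proof.
move=> H1 H2 Hs; rewrite -(Pre_const1 s H1 H2).
apply: eq_bigr => a _; apply: eq_bigr => b _; apply: eq_bigr => t _ /=.
case: (eqVneq t s) => [->|Hts]; first by rewrite Hs.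
case: (boolP (a \in G1 s)) => Ha; last by have [_ ->] := H1 s; rewrite ?mulr0 ?mul0r.
case: (boolP (b \in G2 s)) => Hb; last by have [_ ->] := H2 s; rewrite ?mulr0 ?mul0r.
rewrite (d_other (Habs _ Ha Hb) Hts) ?mulr0 ?mul0r //.
by rewrite /TW2 Hs.
Qed.

Lemma u_mono1 j s : u j s <= u j.+1 s.
Proof.
elim: j s => [|j IH] s.
  rewrite [u 0 s]/=; case: ifP => Hs; last by case/andP: (u01 1 s).
  apply: le_trans (Pre1_le s (uniform_selP R HG1) (u01 0)).
  apply: Pre1_with_ge => xi2 H2; rewrite Pre_u0 //; exact: uniform_selP.
exact: Pre1_mono (u01 _) (u01 _) IH.
Qed.

Lemma u_mono i j s : (i <= j)%N -> u i s <= u j s.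
Proof.
move=> /subnK <-; elim: (j - i)%N => [|n IH] //=.
exact: le_trans IH (u_mono1 _ _).
Qed.

Notation ell := (ell delta G1 G2 T).

Lemma ell_has k s : has (fun j => u j s == u k s) (iota 0 k.+1).
Proof. by apply/hasP; exists k; rewrite ?mem_iota //=. Qed.

Lemma ell_le k s : (ell k s <= k)%N.
Proof.
have := ell_has k s; rewrite has_find size_iota ltnS.
by rewrite /ell.
Qed.

Lemma ell_eq k s : u (ell k s) s = u k s.
Proof.
have := nth_find 0%N (ell_has k s); rewrite nth_iota ?add0n.
  by move/eqP.
by have := ell_le k s; rewrite /ell ltnS.
Qed.

Lemma ell_before k s j : (j < ell k s)%N -> u j s != u k s.
Proof.
move=> Hj; have := before_find 0%N Hj; rewrite nth_iota ?add0n.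
  by move/negbT.
apply: leq_trans Hj _; exact: leq_trans (ell_le k s) (leqnSn k).
Qed.

Definition pure_sel (x : S) (b : M) : S -> M -> R :=
  fun y c => if y == x then (c == b)%:R else uniform_sel R G2 y c.

Lemma pure_selP x b : b \in G2 x -> is_selector G2 (pure_sel x b).
Proof.
move=> Hb y; rewrite /pure_sel; case: eqP => [->|_]; last exact: uniform_selP.
split; last by move=> c Hc; case: eqP Hc => // ->; rewrite Hb.
split=> [c|]; first by rewrite ler0n.
by rewrite (bigD1 b) //= eqxx big1 ?addr0 // => c /negbTE ->.
Qed.

Lemma Pre_pure xi1 x b v :
  Pre delta xi1 (pure_sel x b) v x = \sum_t v t * \sum_a xi1 x a * delta x a b t.
Proof.
rewrite /Pre.
transitivity (\sum_a \sum_t v t * delta x a b t * xi1 x a).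
  apply: eq_bigr => a _.
  rewrite (bigD1 b) //= [X in _ + X]big1 ?addr0.
    by apply: eq_bigr => t _; rewrite /pure_sel eqxx eqxx mulr1.
  by move=> c /negbTE Hc; apply: big1 => t _; rewrite /pure_sel eqxx Hc mulr0.
rewrite exchange_big /=; apply: eq_bigr => t _; rewrite mulr_sumr.
by apply: eq_bigr => a _; ring.
Qed.

Variable zeta : nat -> S -> M -> R.
Hypothesis Hz : forall j, (0 < j)%N ->
     is_selector G1 (zeta j) /\
     (forall s, Pre1_with delta G2 (zeta j) (u j.-1) s = Pre1 delta G1 G2 (u j.-1) s).
Variable k : nat.
Hypothesis Hk : forall s, ~~ W2 delta G1 G2 T s -> 0 < u k.-1 s.

Notation eta := (eta_sel delta G1 G2 T zeta k).
Notation TW := (TW2 delta G1 G2 T).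

Lemma etaP : is_selector G1 eta.
Proof.
move=> s; rewrite /eta_sel; case: ifP => H; first by have [H1 _] := Hz H; exact: H1.
exact: uniform_selP.
Qed.

Definition better (y x : S) :=
  (u k x < u k y) || ((u k y == u k x) && (ell k y < ell k x)%N).

Lemma good_pos x b : ~~ TW x -> b \in G2 x ->
  0 < \sum_(t | TW t || better t x) \sum_a eta x a * delta x a b t.
Proof.
rewrite /TW2 negb_or => /andP [HxT HxW] Hb.
have ukpos : 0 < u k x := lt_le_trans (Hk HxW) (u_mono x (leq_pred k)).
set j := ell k x.
have j0 : (0 < j)%N.
  rewrite lt0n; apply/negP => /eqP j0.
  have := ell_eq k x; rewrite -/j j0 /= (negbTE HxT) => H.
  by move: ukpos; rewrite -H ltxx.
have eta_x : eta x = zeta j x by rewrite /eta_sel -/j j0.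
have [Hzs Hzeq] := Hz j0.
pose w t := \sum_a zeta j x a * delta x a b t.
have w0 t : 0 <= w t.
  by apply: sumr_ge0 => a _; rewrite mulr_ge0 ?d_ge0 ?(sel_ge0 _ _ Hzs).
have w1 : \sum_t w t = 1.
  rewrite /w exchange_big /= -(sel_sum1 x Hzs); apply: eq_bigr => a _.
  by rewrite -mulr_sumr d_sum1 mulr1.
set v := u j.-1.
have key : u k x <= \sum_t v t * w t.
  rewrite -Pre_pure -(ell_eq k x) -/j.
  have -> : u j x = Pre1 delta G1 G2 v x by rewrite /v; case: (j) j0.
  rewrite -Hzeq; apply: Pre1_with_le => //; first exact: pure_selP.
  by move=> t; case/andP: (u01 j.-1 t).
have Hbad t : ~~ (TW t || better t x) -> v t < u k x.
  rewrite negb_or /better negb_or negb_and => /andP [_ /andP [H1 H2]].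
  have vle : v t <= u k t by apply: u_mono; rewrite /v; apply: leq_trans (leq_pred _) (ell_le k x).
  rewrite -leNgt in H1; case: (ltgtP (u k t) (u k x)) H1 H2 => // [Hlt|Heq] _ H2.
    exact: le_lt_trans vle Hlt.
  rewrite /= -leqNgt in H2.
  rewrite -Heq lt_neqAle vle andbT.
  apply: ell_before; rewrite /v -/j; apply: leq_trans H2; rewrite prednK //.
rewrite eta_x ltNge; apply/negP => Hle.
have Hg0 : forall t, TW t || better t x -> w t = 0.
  apply: (psumr_eq0P (P := fun t => TW t || better t x)) => // .
  by apply/eqP; rewrite eq_le Hle sumr_ge0.
have [t0 Ht0] : exists t0, 0 < w t0.
  apply/existsP; apply: contraT; rewrite negb_exists => /forallP Hn.
  have : \sum_t w t <= 0 by apply: sumr_le0 => t _; rewrite leNgt Hn.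
  by rewrite w1 ler10.
have Ht0b : ~~ (TW t0 || better t0 x).
  by apply/negP => /Hg0 H; move: Ht0; rewrite H ltxx.
have pos : 0 < \sum_t (u k x - v t) * w t.
  rewrite (bigD1 t0) //=.
  have h1 : 0 < (u k x - v t0) * w t0 by rewrite mulr_gt0 // subr_gt0 Hbad.
  have h2 : 0 <= \sum_(t | t != t0) (u k x - v t) * w t.
    apply: sumr_ge0 => t _; case: (boolP (TW t || better t x)) => Ht.
      by rewrite Hg0 // mulr0.
    by rewrite mulr_ge0 // subr_ge0 ltW // Hbad.
  lra.
have : \sum_t (u k x - v t) * w t = u k x - \sum_t v t * w t.
  rewrite -[u k x in RHS]mulr1 -w1 mulr_sumr -sumrB.
  by apply: eq_bigr => t _; rewrite mulrBl.
lra.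
Qed.

Lemma better_trans y z x : better y z -> better z x -> better y x.
Proof.
rewrite /better => /orP [H1|/andP [/eqP E1 L1]] /orP [H2|/andP [/eqP E2 L2]].
- by rewrite (lt_trans H2 H1).
- by rewrite -E2 H1.
- by rewrite E1 H2.
- by rewrite E1 E2 eqxx (ltn_trans L1 L2) orbT.
Qed.

Lemma better_irr x : ~~ better x x.
Proof. by rewrite /better ltxx ltnn andbF. Qed.

Definition rk x := if TW x then 0%N else #|[set y | ~~ TW y && better y x]%SET|.+1.

Lemma rk0 x : rk x = 0%N -> TW x.
Proof. by rewrite /rk; case: ifP. Qed.

Lemma rkN x : (rk x <= #|S|.+1)%N.
Proof. by rewrite /rk; case: ifP => // _; rewrite ltnS max_card. Qed.

Lemma rk_good x t : ~~ TW x -> TW t || better t x -> (rk t < rk x)%N.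
Proof.
move=> Hx Ht; rewrite /rk (negbTE Hx).
case: ifP => // HTt; rewrite ltnS; rewrite HTt /= in Ht.
apply: proper_card; apply/properP; split.
  apply/fintype.subsetP => y; rewrite !inE => /andP [-> Hy] /=.
  exact: better_trans Hy Ht.
by exists t; rewrite !inE ?HTt ?Ht ?better_irr ?andbF.
Qed.

Definition val x b := \sum_(t | TW t || better t x) \sum_a eta x a * delta x a b t.

Definition qq := \prod_(p : S * M | ~~ TW p.1 && (p.2 \in G2 p.1)) Num.min (val p.1 p.2) 1.

Lemma min01 x b : ~~ TW x -> b \in G2 x -> 0 < Num.min (val x b) 1 <= 1.
Proof.
move=> Hx Hb; rewrite ge_min lexx orbT andbT lt_min ltr01 andbT.
exact: good_pos.
Qed.

Lemma qq_pos : 0 < qq.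
Proof. by apply: prodr_gt0 => -[x b] /= /andP [Hx Hb]; case/andP: (min01 Hx Hb). Qed.

Lemma qq_le1 : qq <= 1.
Proof.
apply: prodr_ile1 => -[x b] /= /andP [Hx Hb]; case/andP: (min01 Hx Hb) => h1 h2.
by rewrite ltW.
Qed.

Lemma qq_le x b : ~~ TW x -> b \in G2 x -> qq <= val x b.
Proof.
move=> Hx Hb; rewrite /qq (bigD1 (x, b)) /=; last by rewrite Hx Hb.
case/andP: (min01 Hx Hb) => h1 h2.
apply: le_trans (_ : Num.min (val x b) 1 <= val x b); last by rewrite ge_min lexx.
apply: ler_piMr; first exact: ltW.
apply: prodr_ile1 => -[y c] /= /andP [/andP [Hy Hc] _].
by case/andP: (min01 Hy Hc) => g1 g2; rewrite ltW.
Qed.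

Variable pi2 : strategy R S M.
Hypothesis Hpi2 : is_strategy G2 pi2.

Notation pi1 := (memoryless eta).

Lemma stepE s h t : step delta pi1 pi2 s h t =
  \sum_a \sum_b eta (last s h) a * pi2 s h b * delta (last s h) a b t.
Proof. by []. Qed.

Lemma pi2_ge0 s h b : 0 <= pi2 s h b.
Proof. by have [[]] := Hpi2 s h. Qed.

Lemma pi2_sum1 s h : \sum_b pi2 s h b = 1.
Proof. by have [[]] := Hpi2 s h. Qed.

Lemma step_ge0 s h t : 0 <= step delta pi1 pi2 s h t.
Proof.
rewrite stepE; do 2 (apply: sumr_ge0 => ? _).
by rewrite !mulr_ge0 ?d_ge0 ?pi2_ge0 ?(sel_ge0 _ _ etaP).
Qed.

Lemma step_sum1 s h : \sum_t step delta pi1 pi2 s h t = 1.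
Proof.
set x := last s h.
transitivity (\sum_a \sum_b eta x a * pi2 s h b).
  under eq_bigr do rewrite stepE.
  rewrite exchange_big; apply: eq_bigr => a _; rewrite exchange_big.
  by apply: eq_bigr => b _; rewrite -mulr_sumr d_sum1 mulr1.
rewrite -(sel_sum1 x etaP); apply: eq_bigr => a _.
by rewrite -mulr_sumr pi2_sum1 mulr1.
Qed.

Lemma step_good s h : ~~ TW (last s h) ->
  qq <= \sum_(t | (rk t < rk (last s h))%N) step delta pi1 pi2 s h t.
Proof.
set x := last s h => Hx.
apply: le_trans (_ : _ <= \sum_(t | TW t || better t x) step delta pi1 pi2 s h t) _;
  last first.
  rewrite big_mkcond [X in _ <= X]big_mkcond; apply: ler_sum => t _.
  case: ifP => Hg; first by rewrite rk_good.
  by case: ifP => // _; exact: step_ge0.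
have -> : \sum_(t | TW t || better t x) step delta pi1 pi2 s h t =
    \sum_b pi2 s h b * val x b.
  under eq_bigr do rewrite stepE.
  under eq_bigr do rewrite exchange_big.
  rewrite exchange_big; apply: eq_bigr => b _.
  rewrite /val mulr_sumr; apply: eq_bigr => t _.
  rewrite mulr_sumr; apply: eq_bigr => a _; rewrite -/x; ring.
apply: le_trans (_ : \sum_b pi2 s h b * qq <= _).
  by rewrite -mulr_suml pi2_sum1 mul1r.
apply: ler_sum => b _; case: (boolP (b \in G2 x)) => Hb.
  by apply: ler_wpM2l; [exact: pi2_ge0 | exact: qq_le].
by have [_ ->] := Hpi2 s h; rewrite ?mul0r.
Qed.

End Game.

Unset Implicit Arguments.
Local Close Scope classical_set_scope.

Theorem lemma5 (R : realType) (S M : finType) (G1 G2 : S -> {set M})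
    (delta : S -> M -> M -> S -> R) (T : {set S}) (zeta : nat -> S -> M -> R) :
  (forall s, (0 < #|G1 s|)%N) ->
  (forall s, (0 < #|G2 s|)%N) ->
  (forall s a b, is_distr (delta s a b)) ->
  (forall s, TW2 delta G1 G2 T s ->
     forall a b, a \in G1 s -> b \in G2 s -> delta s a b s = 1) ->
  (forall j, (0 < j)%N ->
     is_selector G1 (zeta j) /\
     (forall s, Pre1_with delta G2 (zeta j) (u delta G1 G2 T j.-1) s
                = Pre1 delta G1 G2 (u delta G1 G2 T j.-1) s)) ->
  forall k : nat,
    (forall s, ~~ W2 delta G1 G2 T s -> 0 < u delta G1 G2 T k.-1 s) ->
    forall pi2, is_strategy G2 pi2 ->
    forall s, PrReach delta (memoryless (eta_sel delta G1 G2 T zeta k)) pi2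
                      (TW2 delta G1 G2 T) s = 1.
Proof.
move=> HG1 HG2 Hd Habs Hz k Hk pi2 Hpi2 s.
rewrite /PrReach.
eapply rw_sup.
- exact: step_ge0.
- by move=> s0 h _; exact: step_sum1.
- move=> x; exact: (rk0 (k := k)).
- exact: (qq_pos HG1 HG2 Hd Habs Hz Hk).
- exact: (qq_le1 HG1 HG2 Hd Habs Hz Hk).
- exact: step_good.
- exact: rkN.
Qed.
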